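(* Let $\nu\ge1/2$ and $b,\theta>0$ be fixed. As $\delta\to0$, $$\int_{-\pi}^{\pi}a^\delta_{b,\theta}(\lambda)\,d\lambda\sim(\delta\theta)^{\frac{2\nu}{2\nu+1}}(2\pi C_\nu b)^{\frac1{2\nu+1}}\int_{-\infty}^{\infty}\big(1+|x|^{2\nu+1}\big)^{-1}dx,$$ $$\int_{-\pi}^{\pi}\big[a^\delta_{b,\theta}(\lambda)\big]^2d\lambda\sim(\delta\theta)^{\frac{2\nu}{2\nu+1}}(2\pi C_\nu b)^{\frac1{2\nu+1}}\int_{-\infty}^{\infty}\big(1+|x|^{2\nu+1}\big)^{-2}dx.$$
   Context: For $\alpha>0$, $\omega\in\mathbb R$ let $g^*_{\nu,\alpha}(\omega)=C_\nu\alpha^{2\nu}(\alpha^2+\omega^2)^{-(\nu+1/2)}$ with $C_\nu=\Gamma(\nu+\frac12)/(\sqrt\pi\,\Gamma(\nu))$. For $\delta,\theta>0$ and $\lambda\in[-\pi,\pi]$ let $g^\delta_{\nu,\theta}(\lambda)=\sum_{k\in\mathbb Z}g^*_{\nu,\delta\theta}(\lambda+2k\pi)$, and for $b>0$, $a^\delta_{b,\theta}=\dfrac{b\,g^\delta_{\nu,\theta}}{b\,g^\delta_{\nu,\theta}+(2\pi)^{-1}}$. ''$\sim$'' means the ratio tends to $1$. *)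

(* Defs.v *)
From Stdlib Require Import Reals Lra Arith ClassicalEpsilon.
Open Scope R_scope.

(* Limit of a real sequence (0 if it does not converge; the limit is unique). *)
Definition lim_seq (u : nat -> R) : R :=
  match excluded_middle_informative (exists l, Un_cv u l) with
  | left H => proj1_sig (constructive_indefinite_description _ H)
  | right _ => 0
  end.

(* Riemann integral of f over [a,b] (0 if f is not Riemann integrable). *)
Definition Rint (f : R -> R) (a b : R) : R :=
  match excluded_middle_informative (inhabited (Riemann_integrable f a b)) with
  | left H => RiemannInt (epsilon H (fun _ => True))
  | right _ => 0
  end.

Definition improper_integral_R (f : R -> R) (l : R) : Prop :=
  forall eps, 0 < eps -> exists M, forall a b, a < - M -> M < b ->
    inhabited (Riemann_integrable f a b) /\ Rabs (Rint f a b - l) < eps.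

Definition integral_R (f : R -> R) : R :=
  match excluded_middle_informative (exists l, improper_integral_R f l) with
  | left H => proj1_sig (constructive_indefinite_description _ H)
  | right _ => 0
  end.

(* x^y for x >= 0, y > 0, with 0^y = 0 (Stdlib's Rpower 0 y = 1). *)
Definition rpow (x y : R) : R :=
  if Req_EM_T x 0 then 0 else Rpower x y.

(* Euler/Gauss product definition of the Gamma function (s > 0):
   Gamma(s) = lim_n n! n^s / (s (s+1) ... (s+n)). *)
Definition Gamma (s : R) : R :=
  lim_seq (fun n => INR (Factorial.fact n) * Rpower (INR n) s
                    / prod_f_R0 (fun k => s + INR k) n).

Definition C_nu (nu : R) : R := Gamma (nu + / 2) / (sqrt PI * Gamma nu).

Definition gstar (nu alpha omega : R) : R :=
  C_nu nu * Rpower alpha (2 * nu) * Rpower (alpha ^ 2 + omega ^ 2) (- (nu + / 2)).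

(* g^delta_{nu,theta}(lambda) = sum_{k in Z} g*_{nu,delta theta}(lambda + 2 k pi),
   as the limit of the symmetric partial sums over |k| <= N. *)
Definition gdelta (nu delta theta lambda : R) : R :=
  lim_seq (fun N => sum_f_R0 (fun k =>
     match k with
     | O => gstar nu (delta * theta) lambda
     | _ => gstar nu (delta * theta) (lambda + 2 * INR k * PI)
            + gstar nu (delta * theta) (lambda - 2 * INR k * PI)
     end) N).

Definition adelta (nu b delta theta lambda : R) : R :=
  b * gdelta nu delta theta lambda / (b * gdelta nu delta theta lambda + / (2 * PI)).

Definition equiv_at_0plus (f g : R -> R) : Prop :=
  forall eps, 0 < eps -> exists eta, 0 < eta /\
    forall delta, 0 < delta < eta -> Rabs (f delta / g delta - 1) < eps.

(* Main.v *)
Require Import Defs.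
From Stdlib Require Import Reals Lra Lia ClassicalEpsilon FunctionalExtensionality Factorial.
Open Scope R_scope.

Lemma Rint_eq f a b (pr : Riemann_integrable f a b) : Rint f a b = RiemannInt pr.
Proof.
  unfold Rint. destruct excluded_middle_informative as [H|H].
  - apply RiemannInt_P5.
  - exfalso; apply H; constructor; exact pr.
Qed.

Lemma lim_seq_eq u l : Un_cv u l -> lim_seq u = l.
Proof.
  intro H. unfold lim_seq. destruct excluded_middle_informative as [H1|H1].
  - destruct (constructive_indefinite_description _ H1) as [l' Hl']. simpl.
    eapply UL_sequence; eauto.
  - exfalso; apply H1; eauto.
Qed.

Lemma cp_plus f g x : continuity_pt f x -> continuity_pt g x ->
  continuity_pt (fun y => f y + g y) x.
Proof. intros; apply (continuity_pt_plus f g x); auto. Qed.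
Lemma cp_minus f g x : continuity_pt f x -> continuity_pt g x ->
  continuity_pt (fun y => f y - g y) x.
Proof. intros; apply (continuity_pt_minus f g x); auto. Qed.
Lemma cp_mult f g x : continuity_pt f x -> continuity_pt g x ->
  continuity_pt (fun y => f y * g y) x.
Proof. intros; apply (continuity_pt_mult f g x); auto. Qed.
Lemma cp_inv f x : continuity_pt f x -> f x <> 0 ->
  continuity_pt (fun y => / f y) x.
Proof. intros; apply (continuity_pt_inv f x); auto. Qed.
Lemma cp_const c x : continuity_pt (fun _ => c) x.
Proof. apply continuity_pt_const. intros a b; reflexivity. Qed.
Lemma cp_id x : continuity_pt (fun y => y) x.
Proof. apply derivable_continuous_pt. exists 1. apply derivable_pt_lim_id. Qed.
Lemma cp_comp f g x : continuity_pt g x -> continuity_pt f (g x) ->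
  continuity_pt (fun y => f (g y)) x.
Proof. intros; apply (continuity_pt_comp g f x); auto. Qed.
Lemma cp_exp x : continuity_pt exp x.
Proof. apply derivable_continuous_pt. exists (exp x). apply derivable_pt_lim_exp. Qed.
Lemma cp_ln x : 0 < x -> continuity_pt ln x.
Proof. intro; apply derivable_continuous_pt. exists (/ x). apply derivable_pt_lim_ln; auto. Qed.
Lemma cp_Rpower f e x : continuity_pt f x -> 0 < f x ->
  continuity_pt (fun y => Rpower (f y) e) x.
Proof.
  intros Hf Hp. unfold Rpower.
  apply (cp_comp exp (fun y => e * ln (f y))).
  - apply cp_mult. apply cp_const. apply (cp_comp ln f); auto. apply cp_ln; auto.
  - apply cp_exp.
Qed.
Lemma cp_pow2 f x : continuity_pt f x -> continuity_pt (fun y => (f y)^2) x.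
Proof. intros. replace (fun y => (f y)^2) with (fun y => f y * f y).
  apply cp_mult; auto. apply functional_extensionality; intro; ring. Qed.

Lemma dpl_affine u v x : derivable_pt_lim (fun x => u*x+v) x u.
Proof.
  assert (H : derivable_pt_lim ((mult_real_fct u id) + fct_cte v)%F x (u * 1 + 0)).
  2:{ replace (u*1+0) with u in H by ring. exact H. }
  apply derivable_pt_lim_plus. apply derivable_pt_lim_scal. apply derivable_pt_lim_id.
  apply derivable_pt_lim_const.
Qed.

Lemma Rint_affine f u v a b : 0 < u -> a <= b -> (forall x, continuity_pt f x) ->
  Rint (fun x => f (u*x+v)) a b = / u * Rint f (u*a+v) (u*b+v).
Proof.
  intros hu hab hf.
  assert (hAB : u*a+v <= u*b+v) by nra.
  assert (C0 : forall x, u*a+v <= x <= u*b+v -> continuity_pt f x) by auto.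
  assert (C1 : forall x, a <= x <= b -> continuity_pt (fun x => f (u*x+v)) x).
  { intros x _. apply (cp_comp f (fun x => u*x+v)). apply cp_plus. apply cp_mult.
    apply cp_const. apply cp_id. apply cp_const. apply hf. }
  pose (P := primitive hAB (FTC_P1 hAB C0)).
  pose (Q := primitive hab (FTC_P1 hab C1)).
  rewrite (Rint_eq _ _ _ (continuity_implies_RiemannInt hab C1)).
  rewrite (Rint_eq _ _ _ (continuity_implies_RiemannInt hAB C0)).
  rewrite (RiemannInt_P20 hab (FTC_P1 hab C1)).
  rewrite (RiemannInt_P20 hAB (FTC_P1 hAB C0)).
  fold P Q.
  assert (HQ := RiemannInt_P29 hab C1). fold Q in HQ.
  assert (HR : antiderivative (fun x => f (u*x+v)) (fun x => / u * P (u*x+v)) a b).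
  { split; [|exact hab]. intros x hx.
    assert (D : derivable_pt_lim (fun x => / u * P (u*x+v)) x (f (u*x+v))).
    { replace (f (u*x+v)) with (/ u * (f (u*x+v) * u)) by (field; lra).
      apply (derivable_pt_lim_scal (fun x => P (u*x+v))).
      apply (derivable_pt_lim_comp (fun x => u*x+v) P).
      - apply dpl_affine.
      - apply (RiemannInt_P28 hAB C0). nra. }
    exists (exist _ _ D). reflexivity. }
  destruct (antiderivative_Ucte _ _ _ _ _ HQ HR) as [c Hc].
  rewrite (Hc a), (Hc b); [ring|lra|lra].
Qed.

Lemma Rint_le f g a b : a <= b -> Riemann_integrable f a b -> Riemann_integrable g a b ->
  (forall x, a < x < b -> f x <= g x) -> Rint f a b <= Rint g a b.
Proof.
  intros hab p1 p2 H. rewrite (Rint_eq _ _ _ p1), (Rint_eq _ _ _ p2).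
  apply RiemannInt_P19; auto.
Qed.

Lemma Rint_chasles f a b c : Riemann_integrable f a b -> Riemann_integrable f b c ->
  Rint f a b + Rint f b c = Rint f a c.
Proof.
  intros p1 p2. rewrite (Rint_eq _ _ _ p1), (Rint_eq _ _ _ p2),
   (Rint_eq _ _ _ (RiemannInt_P24 p1 p2)). apply RiemannInt_P26.
Qed.

Lemma Rint_const c a b : Rint (fun _ => c) a b = c * (b - a).
Proof.
  change (Rint (fct_cte c) a b = c * (b - a)).
  rewrite (Rint_eq _ _ _ (RiemannInt_P14 a b c)). apply RiemannInt_P15.
Qed.

Lemma Rint_plus_const f c a b : Riemann_integrable f a b ->
  Rint (fun x => f x + c) a b = Rint f a b + c * (b - a).
Proof.
  intro p. 
  assert (E : (fun x => f x + c) = (fun x => f x + c * fct_cte 1 x)).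
  { apply functional_extensionality; intro; unfold fct_cte; ring. }
  rewrite E. pose proof (RiemannInt_P10 c p (RiemannInt_P14 a b 1)) as p3.
  rewrite (Rint_eq _ _ _ p3), (RiemannInt_P13 p (RiemannInt_P14 a b 1) p3).
  rewrite (Rint_eq _ _ _ p), RiemannInt_P15. ring.
Qed.

Lemma int_cont f a b : a <= b -> (forall x, continuity_pt f x) -> Riemann_integrable f a b.
Proof. intros; apply continuity_implies_RiemannInt; auto. Qed.

Lemma int_plus_const f c a b : Riemann_integrable f a b ->
  Riemann_integrable (fun x => f x + c) a b.
Proof.
  intro p. refine (@Riemann_integrable_ext (fun x => f x + c * fct_cte 1 x) _ a b _
    (RiemannInt_P10 c p (RiemannInt_P14 a b 1))).
  intros; unfold fct_cte; ring.
Qed.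

Lemma abs_split x a : Rabs x <= a -> - a <= x <= a.
Proof. intro H. pose proof (Rle_abs x). pose proof (Rle_abs (-x)). rewrite Rabs_Ropp in H1. lra. Qed.

Lemma ln_le' x y : 0 < x -> x <= y -> ln x <= ln y.
Proof.
  intros hx [h|h]. left; apply ln_increasing; auto. subst; lra.
Qed.

Lemma ln_upper x : 0 <= x -> ln (1 + x) <= x.
Proof.
  intro hx. rewrite <- (ln_exp x) at 2. apply ln_le'. lra. apply exp_ineq1_le.
Qed.

Lemma ln_lower x : 0 <= x -> x - x^2 <= ln (1 + x).
Proof.
  intro hx.
  assert (H : / (1 + x) <= exp (- (x / (1 + x)))).
  { replace (/ (1 + x)) with (1 + - (x / (1+x))) by (field; lra). apply exp_ineq1_le. }
  apply ln_le' in H. 2:{ apply Rinv_0_lt_compat; lra. }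
  rewrite ln_exp, ln_Rinv in H by lra.
  assert (x^2 / (1 + x) <= x^2).
  { apply Rmult_le_reg_r with (1 + x). lra. field_simplify; nra. }
  assert (x - x / (1 + x) = x^2 / (1+x)) by (field; lra). lra.
Qed.

Lemma cv_of_incr (u : nat -> R) C :
  (forall n, Rabs (u (S n) - u n) <= C / ((INR n + 1) * (INR n + 2))) ->
  exists l, Un_cv u l.
Proof.
  intro H.
  assert (HC : forall n, 0 <= C / ((INR n + 1) * (INR n + 2))).
  { intro n. eapply Rle_trans. apply Rabs_pos. apply H. }
  pose (w' := fun n => u n - C / (INR n + 1)).
  pose (w := fun n => u n + C / (INR n + 1)).
  assert (Hd : forall n, C / (INR n + 1) - C / (INR (S n) + 1) = C / ((INR n + 1) * (INR n + 2))).
  { intro n. rewrite S_INR. pose proof (pos_INR n). field. lra. }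
  assert (Hg : Un_growing w').
  { intro n. unfold w'. specialize (H n). specialize (Hd n).
    apply abs_split in H. lra. }
  assert (Hw : forall n, w (S n) <= w n).
  { intro n. unfold w. specialize (H n). specialize (Hd n). apply abs_split in H. lra. }
  assert (Hw0 : forall n, w n <= w 0%nat).
  { induction n. lra. specialize (Hw n). lra. }
  assert (Hub : has_ub w').
  { exists (w 0%nat). intros x [n ->]. specialize (Hw0 n). unfold w, w' in *.
    assert (0 <= C) by (specialize (HC 0%nat); simpl in HC;
      apply Rmult_le_reg_r with (/ ((0+1)*(0+2))); [apply Rinv_0_lt_compat; lra| lra]).
    assert (0 <= C / (INR n + 1)) by (pose proof (pos_INR n);
      apply Rmult_le_pos; [lra| left; apply Rinv_0_lt_compat; lra]). lra. }
  destruct (growing_cv w' Hg Hub) as [l Hl].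
  exists l.
  assert (H0 : Un_cv (fun n => C / (INR n + 1)) 0).
  { intros eps heps.
    destruct (archimed (Rabs C / eps)) as [h1 _].
    assert (0 <= IZR (up (Rabs C / eps))).
    { pose proof (Rabs_pos C). assert (0 <= Rabs C / eps)
        by (apply Rmult_le_pos; [lra| left; apply Rinv_0_lt_compat; lra]). lra. }
    destruct (IZN (up (Rabs C / eps))) as [N HN]. { apply le_IZR. lra. }
    exists N. intros n hn. unfold Rdist. rewrite Rminus_0_r.
    apply le_INR in hn. rewrite HN, <- INR_IZR_INZ in h1.
    unfold Rdiv. rewrite Rabs_mult, Rabs_inv, (Rabs_right (INR n + 1)).
    2:{ pose proof (pos_INR n); lra. }
    apply Rmult_lt_reg_r with (INR n + 1). pose proof (pos_INR n); lra.
    rewrite Rmult_assoc, Rinv_l by (pose proof (pos_INR n); lra).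
    assert (Rabs C < eps * INR N + eps).
    { assert (Rabs C / eps * eps = Rabs C) by (field; lra). nra. }
    nra. }
  apply (Un_cv_ext (fun n => w' n + C / (INR n + 1))).
  intro n; unfold w'; ring.
  replace l with (l + 0) by ring. apply CV_plus; auto.
Qed.

Lemma Un_cv_S (u : nat -> R) l : Un_cv (fun n => u (S n)) l -> Un_cv u l.
Proof.
  intros H eps he. destruct (H eps he) as [N HN]. exists (S N). intros n hn.
  destruct n. lia. apply HN. lia.
Qed.

Lemma exp_mln x : 0 < x -> exp (- ln x) = / x.
Proof. intro. rewrite exp_Ropp, exp_ln; auto. Qed.

Lemma prod_pos s n : 0 < s -> 0 < prod_f_R0 (fun k => s + INR k) n.
Proof.
  intro. induction n. simpl; lra.
  change (prod_f_R0 (fun k => s + INR k) (S n)) with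
    (prod_f_R0 (fun k => s + INR k) n * (s + INR (S n))).
  apply Rmult_lt_0_compat; auto. pose proof (pos_INR (S n)). lra.
Qed.

Lemma gamma_ratio s n : 0 < s ->
  INR (fact (S n)) / prod_f_R0 (fun k => s + INR k) (S n)
  = exp (- ln s - sum_f_R0 (fun k => ln (1 + s / (INR k + 1))) n).
Proof.
  intro hs. induction n.
  - simpl. unfold Rminus. rewrite exp_plus, exp_mln by lra.
    rewrite <- ln_Rinv by lra. rewrite exp_ln.
    2:{ apply Rinv_0_lt_compat. lra. }
    field. lra.
  - replace (fact (S (S n))) with (S (S n) * fact (S n))%nat by reflexivity.
    rewrite mult_INR.
    change (prod_f_R0 (fun k => s + INR k) (S (S n))) with
      (prod_f_R0 (fun k => s + INR k) (S n) * (s + INR (S (S n)))).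
    change (sum_f_R0 (fun k => ln (1 + s / (INR k + 1))) (S n)) with
      (sum_f_R0 (fun k => ln (1 + s / (INR k + 1))) n + ln (1 + s / (INR (S n) + 1))).
    replace (- ln s - (sum_f_R0 (fun k => ln (1 + s / (INR k + 1))) n + ln (1 + s / (INR (S n) + 1))))
      with ((- ln s - sum_f_R0 (fun k => ln (1 + s / (INR k + 1))) n) + - ln (1 + s / (INR (S n) + 1))) by ring.
    rewrite exp_plus, <- IHn.
    pose proof (pos_INR n). pose proof (prod_pos s (S n) hs).
    rewrite exp_mln.
    2:{ apply Rplus_lt_0_compat. lra. apply Rmult_lt_0_compat. lra. apply Rinv_0_lt_compat. rewrite S_INR; lra. }
    rewrite !S_INR. field. repeat split; lra.
Qed.

Lemma ln_shift x : 0 < x -> ln (x + 1) - ln x = ln (1 + / x).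
Proof.
  intro hx. replace (x + 1) with (x * (1 + / x)) by (field; lra).
  rewrite ln_mult; try lra. assert (0 < / x) by (apply Rinv_0_lt_compat; lra). lra.
Qed.

Lemma inv_cv0 : Un_cv (fun n => / (INR n + 1)) 0.
Proof.
  intros eps he. destruct (archimed (/ eps)) as [h1 _].
  assert (0 < / eps) by (apply Rinv_0_lt_compat; lra).
  destruct (IZN (up (/ eps))) as [N HN]. { apply le_IZR. lra. }
  exists N. intros n hn. unfold Rdist. rewrite Rminus_0_r.
  apply le_INR in hn. rewrite HN, <- INR_IZR_INZ in h1.
  rewrite Rabs_right. 2:{ left; apply Rinv_0_lt_compat; pose proof (pos_INR n); lra. }
  apply Rmult_lt_reg_r with (INR n + 1). pose proof (pos_INR n); lra.
  rewrite Rinv_l by (pose proof (pos_INR n); lra).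
  apply Rmult_lt_reg_l with (/ eps). auto.
  rewrite <- Rmult_assoc, Rinv_l by lra. lra.
Qed.

Lemma Gamma_pos s : 0 < s -> 0 < Gamma s.
Proof.
  intro hs.
  pose (V := fun n => s * ln (INR n + 2) - sum_f_R0 (fun k => ln (1 + s / (INR k + 1))) n).
  assert (HV : exists l, Un_cv V l).
  { apply cv_of_incr with (C := s + s^2). intro n.
    pose proof (pos_INR n).
    assert (E : V (S n) - V n = s * ln (1 + / (INR n + 2)) - ln (1 + s * / (INR n + 2))).
    { unfold V. change (sum_f_R0 (fun k => ln (1 + s / (INR k + 1))) (S n)) with
       (sum_f_R0 (fun k => ln (1 + s / (INR k + 1))) n + ln (1 + s / (INR (S n) + 1))).
      rewrite <- (ln_shift (INR n + 2)) by lra. rewrite S_INR.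
      replace (INR n + 1 + 2) with (INR n + 2 + 1) by ring.
      replace (INR n + 1 + 1) with (INR n + 2) by ring. unfold Rdiv. ring. }
    rewrite E. set (x := / (INR n + 2)).
    assert (hx : 0 < x) by (apply Rinv_0_lt_compat; lra).
    pose proof (ln_upper x) as u1. pose proof (ln_lower x) as l1.
    pose proof (ln_upper (s*x)) as u2. pose proof (ln_lower (s*x)) as l2.
    assert (x^2 <= / ((INR n + 1) * (INR n + 2))).
    { unfold x. rewrite pow_inv. apply Rinv_le_contravar.
      nra. nra. }
    assert (s * x^2 <= s * / ((INR n + 1) * (INR n + 2))) by (apply Rmult_le_compat_l; lra).
    assert (s^2 * x^2 <= s^2 * / ((INR n + 1) * (INR n + 2))) by (apply Rmult_le_compat_l; nra).
    unfold Rdiv. apply Rabs_le. split; nra. }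
  destruct HV as [l Hl].
  assert (Ha : Un_cv (fun n => INR (fact (S n)) * Rpower (INR (S n)) s
                    / prod_f_R0 (fun k => s + INR k) (S n)) (exp (l - s * 0 - ln s))).
  { apply (Un_cv_ext (fun n => exp (V n - s * ln (1 + / (INR n + 1)) - ln s))).
    - intro n. pose proof (pos_INR n).
      replace (INR (fact (S n)) * Rpower (INR (S n)) s / prod_f_R0 (fun k => s + INR k) (S n))
        with (Rpower (INR (S n)) s * (INR (fact (S n)) / prod_f_R0 (fun k => s + INR k) (S n)))
        by (unfold Rdiv; ring).
      rewrite gamma_ratio by auto. unfold Rpower. rewrite <- exp_plus. f_equal.
      unfold V. rewrite <- ln_shift by lra. rewrite S_INR.
      replace (INR n + 1 + 1) with (INR n + 2) by ring. ring.
    - apply continuity_seq. apply cp_exp.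
      apply CV_minus. 2:{ intros e he; exists 0%nat; intros; unfold Rdist; rewrite Rminus_diag, Rabs_R0; lra. }
      apply CV_minus. auto.
      apply (CV_mult (fun _ => s)). intros e he; exists 0%nat; intros; unfold Rdist; rewrite Rminus_diag, Rabs_R0; lra.
      assert (H1 : Un_cv (fun i => 1 + / (INR i + 1)) (1 + 0)).
      { apply (CV_plus (fun _ => 1)). intros e he; exists 0%nat; intros; unfold Rdist; rewrite Rminus_diag, Rabs_R0; lra.
        apply inv_cv0. }
      rewrite Rplus_0_r in H1.
      rewrite <- ln_1. apply continuity_seq. apply cp_ln. lra. exact H1. }
  unfold Gamma. rewrite (lim_seq_eq _ _ (Un_cv_S _ _ Ha)). apply exp_pos.
Qed.

Lemma PI_gt3 : 3 < PI.
Proof. pose proof PI2_3_2. lra. Qed.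

Lemma C_nu_pos nu : 0 < nu -> 0 < C_nu nu.
Proof.
  intro h. unfold C_nu. apply Rmult_lt_0_compat. apply Gamma_pos. lra.
  apply Rinv_0_lt_compat. apply Rmult_lt_0_compat. apply sqrt_lt_R0. apply PI_RGT_0.
  apply Gamma_pos; lra.
Qed.

Lemma Rpower_pos x y : 0 < Rpower x y.
Proof. unfold Rpower. apply exp_pos. Qed.

Lemma gstar_pos nu alpha w : 0 < nu -> 0 < gstar nu alpha w.
Proof.
  intro. unfold gstar. apply Rmult_lt_0_compat. apply Rmult_lt_0_compat.
  apply C_nu_pos; auto. apply Rpower_pos. apply Rpower_pos.
Qed.

Lemma gstar_bound nu alpha w : / 2 <= nu -> 1 <= w^2 ->
  gstar nu alpha w <= C_nu nu * Rpower alpha (2*nu) / w^2.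
Proof.
  intros hnu hw. unfold gstar. pose proof (C_nu_pos nu ltac:(lra)).
  pose proof (Rpower_pos alpha (2*nu)).
  unfold Rdiv. apply Rmult_le_compat_l. nra.
  rewrite Rpower_Ropp. apply Rinv_le_contravar. lra.
  assert (0 <= alpha^2) by nra.
  apply Rle_trans with (Rpower (alpha^2 + w^2) 1).
  rewrite Rpower_1 by lra. lra.
  apply Rle_Rpower. lra. lra.
Qed.

Lemma gstar_cont nu alpha w : 0 < alpha -> continuity_pt (gstar nu alpha) w.
Proof.
  intro ha. unfold gstar. apply cp_mult. apply cp_const.
  apply (cp_Rpower (fun w => alpha^2 + w^2)). apply cp_plus. apply cp_const.
  apply cp_pow2, cp_id. nra.
Qed.

Definition gterm nu alpha lambda k :=
  match k with
  | O => gstar nu alpha lambda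
  | _ => gstar nu alpha (lambda + 2 * INR k * PI) + gstar nu alpha (lambda - 2 * INR k * PI)
  end.

Lemma gdelta_eq nu delta theta lambda :
  gdelta nu delta theta lambda = lim_seq (fun N => sum_f_R0 (gterm nu (delta*theta) lambda) N).
Proof. reflexivity. Qed.

Lemma tail_bound (u : nat -> R) D :
  (forall n, 0 <= u (S n) - u n <= D / ((INR n + 1) * (INR n + 2))) ->
  Un_cv u (lim_seq u) /\ forall n, 0 <= lim_seq u - u n <= D / (INR n + 1).
Proof.
  intro H.
  destruct (cv_of_incr u D) as [l Hl].
  { intro n. specialize (H n). rewrite Rabs_right; lra. }
  rewrite (lim_seq_eq _ _ Hl). split; auto. intro n.
  assert (Hg : Un_growing u) by (intro k; specialize (H k); lra).
  split. pose proof (growing_ineq u l Hg Hl n). lra.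
  assert (Hm : forall m, u (n + m)%nat - u n <= D / (INR n + 1) - D / (INR (n + m) + 1)).
  { induction m. rewrite Nat.add_0_r. lra.
    specialize (H (n + m)%nat). rewrite Nat.add_succ_r.
    assert (D / (INR (n + m) + 1) - D / (INR (S (n + m)) + 1) = D / ((INR (n+m) + 1) * (INR (n+m) + 2))).
    { rewrite S_INR. pose proof (pos_INR (n+m)). field. lra. }
    lra. }
  assert (HD : 0 <= D).
  { specialize (H 0%nat). simpl in H. destruct H as [H1 H2].
    apply Rmult_le_reg_r with (/ ((0+1)*(0+2))). apply Rinv_0_lt_compat; lra. lra. }
  assert (Hm' : forall m, u (n + m)%nat <= u n + D / (INR n + 1)).
  { intro m. specialize (Hm m). pose proof (pos_INR (n+m)).
    assert (0 <= D / (INR (n + m) + 1)) by (apply Rmult_le_pos; [lra|left; apply Rinv_0_lt_compat; lra]).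
    lra. }
  destruct (Rle_dec l (u n + D / (INR n + 1))) as [h|h]. lra. exfalso.
  destruct (Hl (l - (u n + D / (INR n + 1)))) as [N HN]. lra.
  specialize (HN (n + N)%nat ltac:(lia)). specialize (Hm' N).
  unfold Rdist in HN. apply Rabs_def2 in HN. lra.
Qed.

Lemma gterm_bound nu alpha lambda n : / 2 <= nu -> Rabs lambda <= 3 * PI / 2 ->
  0 <= gterm nu alpha lambda (S n)
    <= 4 * (C_nu nu * Rpower alpha (2*nu)) / ((INR n + 1) * (INR n + 2)).
Proof.
  intros hnu hl. change (gterm nu alpha lambda (S n)) with
    (gstar nu alpha (lambda + 2 * INR (S n) * PI) + gstar nu alpha (lambda - 2 * INR (S n) * PI)).
  set (B := C_nu nu * Rpower alpha (2*nu)).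
  pose proof (pos_INR n) as hn. pose proof PI_gt3.
  apply abs_split in hl.
  assert (Hk : forall w, (INR n + 1) <= Rabs w -> gstar nu alpha w <= B / (INR n + 1)^2).
  { intros w hw. 
    assert (1 <= (INR n + 1)^2) by nra.
    pose proof (pow2_abs w). pose proof (Rabs_pos w).
    assert ((INR n + 1)^2 <= w^2) by nra.
    eapply Rle_trans. apply gstar_bound; auto. nra. unfold B. unfold Rdiv. apply Rmult_le_compat_l.
    pose proof (C_nu_pos nu ltac:(lra)). pose proof (Rpower_pos alpha (2*nu)). nra.
    apply Rinv_le_contravar. nra. nra. }
  assert (HB : 0 <= B) by (pose proof (C_nu_pos nu ltac:(lra)); pose proof (Rpower_pos alpha (2*nu)); unfold B; nra).
  rewrite S_INR.
  assert (h1 : INR n + 1 <= Rabs (lambda + 2 * (INR n + 1) * PI)).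
  { rewrite Rabs_right; nra. }
  assert (h2 : INR n + 1 <= Rabs (lambda - 2 * (INR n + 1) * PI)).
  { rewrite Rabs_left1; nra. }
  pose proof (Hk _ h1). pose proof (Hk _ h2).
  pose proof (gstar_pos nu alpha (lambda + 2 * (INR n + 1) * PI) ltac:(lra)).
  pose proof (gstar_pos nu alpha (lambda - 2 * (INR n + 1) * PI) ltac:(lra)).
  split. lra.
  assert (B / (INR n + 1)^2 <= 2 * B / ((INR n + 1) * (INR n + 2))).
  { unfold Rdiv. apply Rmult_le_reg_r with ((INR n + 1)^2 * (INR n + 2)). nra.
    field_simplify; try nra. }
  lra.
Qed.

Lemma gdelta_props nu delta theta lambda : / 2 <= nu -> Rabs lambda <= 3 * PI / 2 ->
  Un_cv (fun N => sum_f_R0 (gterm nu (delta*theta) lambda) N) (gdelta nu delta theta lambda) /\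
  forall n, 0 <= gdelta nu delta theta lambda - sum_f_R0 (gterm nu (delta*theta) lambda) n
    <= 4 * (C_nu nu * Rpower (delta*theta) (2*nu)) / (INR n + 1).
Proof.
  intros hnu hl. rewrite gdelta_eq. apply tail_bound.
  intro n. change (sum_f_R0 (gterm nu (delta * theta) lambda) (S n)) with
    (sum_f_R0 (gterm nu (delta * theta) lambda) n + gterm nu (delta*theta) lambda (S n)).
  pose proof (gterm_bound nu (delta*theta) lambda n hnu hl). lra.
Qed.

Lemma gdelta_bounds nu delta theta lambda : / 2 <= nu -> Rabs lambda <= 3 * PI / 2 ->
  gstar nu (delta*theta) lambda <= gdelta nu delta theta lambda
    <= gstar nu (delta*theta) lambda + 4 * (C_nu nu * Rpower (delta*theta) (2*nu)).
Proof.
  intros hnu hl. destruct (gdelta_props nu delta theta lambda hnu hl) as [_ H].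
  specialize (H 0%nat). simpl in H. lra.
Qed.

Lemma psum_cont nu alpha n y : 0 < alpha ->
  continuity_pt (fun l => sum_f_R0 (gterm nu alpha l) n) y.
Proof.
  intro ha. induction n.
  - simpl. apply gstar_cont; auto.
  - change (continuity_pt (fun l => sum_f_R0 (gterm nu alpha l) n + gterm nu alpha l (S n)) y).
    apply cp_plus; auto. unfold gterm.
    apply cp_plus; apply (cp_comp (gstar nu alpha)).
    apply cp_plus. apply cp_id. apply cp_const. apply gstar_cont; auto.
    apply cp_minus. apply cp_id. apply cp_const. apply gstar_cont; auto.
Qed.

Lemma gdelta_cont nu delta theta lambda : / 2 <= nu -> 0 < delta * theta ->
  Rabs lambda <= PI -> continuity_pt (gdelta nu delta theta) lambda.
Proof.
  intros hnu ha hl. pose proof PI_gt3.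
  assert (hr : 0 < 3 * PI / 2) by lra.
  apply (CVU_continuity (fun n l => sum_f_R0 (gterm nu (delta*theta) l) n) _ 0 (mkposreal _ hr)).
  - intros eps he.
    set (B := 4 * (C_nu nu * Rpower (delta*theta) (2*nu))).
    assert (HB : 0 <= B) by (pose proof (C_nu_pos nu ltac:(lra)); pose proof (Rpower_pos (delta*theta) (2*nu)); unfold B; nra).
    destruct (archimed (B / eps)) as [h1 _].
    assert (0 <= B / eps) by (apply Rmult_le_pos; [lra| left; apply Rinv_0_lt_compat; lra]).
    destruct (IZN (up (B / eps))) as [N HN]. { apply le_IZR. lra. }
    rewrite HN, <- INR_IZR_INZ in h1.
    exists N. intros n y hn hy. unfold Boule in hy; simpl in hy. rewrite Rminus_0_r in hy.
    destruct (gdelta_props nu delta theta y hnu ltac:(lra)) as [_ Hgp].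
    specialize (Hgp n). fold B in Hgp. rewrite Rabs_right by lra.
    apply le_INR in hn.
    assert (B / (INR n + 1) < eps).
    { apply Rmult_lt_reg_r with (INR n + 1). pose proof (pos_INR n); lra.
      unfold Rdiv. rewrite Rmult_assoc, Rinv_l by (pose proof (pos_INR n); lra).
      assert (B / eps * eps = B) by (field; lra). nra. }
    lra.
  - intros. apply psum_cont; auto.
  - unfold Boule; simpl. rewrite Rminus_0_r. lra.
Qed.

Lemma Rint_antideriv f F a b : a <= b -> (forall x, continuity_pt f x) ->
  (forall x, derivable_pt_lim F x (f x)) -> Rint f a b = F b - F a.
Proof.
  intros hab hf hF.
  assert (C0 : forall x, a <= x <= b -> continuity_pt f x) by auto.
  pose (P := primitive hab (FTC_P1 hab C0)).
  rewrite (Rint_eq _ _ _ (continuity_implies_RiemannInt hab C0)).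
  rewrite (RiemannInt_P20 hab (FTC_P1 hab C0)). fold P.
  assert (HP := RiemannInt_P29 hab C0). fold P in HP.
  assert (HR : antiderivative f F a b).
  { split; [|exact hab]. intros x hx. exists (exist _ _ (hF x)). reflexivity. }
  destruct (antiderivative_Ucte _ _ _ _ _ HP HR) as [c Hc].
  rewrite (Hc a), (Hc b); [ring|lra|lra].
Qed.

Lemma Rint_nonneg f a b : a <= b -> Riemann_integrable f a b ->
  (forall x, a < x < b -> 0 <= f x) -> 0 <= Rint f a b.
Proof.
  intros hab p H. replace 0 with (Rint (fun _ => 0) a b).
  apply Rint_le; auto. apply RiemannInt_P14. rewrite Rint_const; ring.
Qed.

Lemma rpow_nonneg x y : 0 <= rpow x y.
Proof. unfold rpow. destruct Req_EM_T. lra. left; unfold Rpower; apply exp_pos. Qed.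
Lemma Rpower_pos' x y : 0 < Rpower x y.
Proof. unfold Rpower. apply exp_pos. Qed.

Lemma rpow_abs_cont p x : 0 < p -> continuity_pt (fun x => rpow (Rabs x) p) x.
Proof.
  intro hp. destruct (Req_dec x 0) as [->|hx].
  - intros eps he. exists (Rmin 1 (Rmin eps (Rpower eps (/ p)))). split.
    { apply Rmin_pos. lra. apply Rmin_pos. lra. apply Rpower_pos'. }
    intros y [_ hy]. simpl in hy |- *. unfold R_dist, Rdist in *. rewrite Rminus_0_r in hy.
    rewrite Rabs_R0. unfold rpow at 2. destruct Req_EM_T; [|lra]. rewrite Rminus_0_r.
    unfold rpow. destruct Req_EM_T. rewrite Rabs_R0; lra.
    rewrite Rabs_right by (left; apply Rpower_pos').
    assert (h0 : 0 < Rabs y) by (pose proof (Rabs_pos y); lra).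
    assert (h1 : Rabs y < Rpower eps (/ p)).
    { eapply Rlt_le_trans. apply hy. eapply Rle_trans; apply Rmin_r. }
    assert (h2 := Rlt_Rpower_l (Rabs y) (Rpower eps (/ p)) p hp (conj h0 h1)).
    rewrite Rpower_mult, Rinv_l, Rpower_1 in h2 by lra. exact h2.
  - apply (continuity_pt_locally_ext (fun y => Rpower (Rabs y) p) _ (Rabs x)).
    apply Rabs_pos_lt; auto.
    intros y hy. unfold rpow. destruct Req_EM_T as [e|]; auto.
    exfalso. unfold Rdist in hy. assert (y = 0) by (destruct (Req_dec y 0); auto;
      pose proof (Rabs_pos_lt y H); lra). subst.
    rewrite Rminus_0_l, Rabs_Ropp in hy. lra.
    apply (cp_Rpower Rabs). apply Rcontinuity_abs. apply Rabs_pos_lt; auto.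
Qed.

Definition fx (p x : R) : R := / (1 + rpow (Rabs x) p).

Lemma fx_cont p x : 0 < p -> continuity_pt (fx p) x.
Proof.
  intro hp. unfold fx. apply cp_inv. apply cp_plus. apply cp_const.
  apply rpow_abs_cont; auto. pose proof (rpow_nonneg (Rabs x) p). lra.
Qed.

Lemma fx_range p x : 0 < fx p x <= 1.
Proof.
  unfold fx. pose proof (rpow_nonneg (Rabs x) p). split.
  apply Rinv_0_lt_compat; lra. rewrite <- Rinv_1. apply Rinv_le_contravar; lra.
Qed.

Lemma fx_half p x : 0 < p -> Rabs x <= 1 -> / 2 <= fx p x.
Proof.
  intros hp hx. unfold fx. apply Rinv_le_contravar. pose proof (rpow_nonneg (Rabs x) p); lra.
  unfold rpow. destruct Req_EM_T. lra.
  assert (Rpower (Rabs x) p <= 1).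
  { unfold Rpower. rewrite <- exp_0. destruct (Rle_lt_or_eq_dec _ _ (Rle_refl (exp (p * ln (Rabs x))))).
    lra. assert (ln (Rabs x) <= 0). { rewrite <- ln_1. apply ln_le'. pose proof (Rabs_pos x); lra. lra. }
    assert (p * ln (Rabs x) <= 0) by nra.
    destruct (Rle_lt_or_eq_dec _ _ H0). left; apply exp_increasing; auto. rewrite e0; lra. }
  lra.
Qed.

Lemma fx_atan p x : 2 <= p -> fx p x <= 2 / (1 + x^2).
Proof.
  intro hp. pose proof (fx_range p x). destruct (Rle_dec (Rabs x) 1) as [h|h].
  - pose proof (pow2_abs x). pose proof (Rabs_pos x).
    apply Rle_trans with 1. lra. apply Rmult_le_reg_r with (1 + x^2). nra.
    unfold Rdiv. rewrite Rmult_assoc, Rinv_l by nra. nra.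
  - unfold fx. unfold rpow. destruct Req_EM_T. lra.
    assert (x^2 <= Rpower (Rabs x) p).
    { rewrite <- pow2_abs. rewrite <- Rpower_pow by lra. apply Rle_Rpower. lra. simpl; lra. }
    unfold Rdiv. rewrite <- (Rmult_1_l (/ (1 + Rpower _ _))).
    apply Rmult_le_compat. lra. left; apply Rinv_0_lt_compat; pose proof (Rpower_pos' (Rabs x) p); lra.
    lra. apply Rinv_le_contravar. nra. lra.
Qed.

Lemma atan_int a b : a <= b -> Rint (fun x => 2 / (1 + x^2)) a b = 2 * atan b - 2 * atan a.
Proof.
  intro hab. apply (Rint_antideriv _ (fun x => 2 * atan x)); auto.
  - intro x. apply cp_mult. apply cp_const. apply cp_inv. apply cp_plus. apply cp_const.
    apply cp_pow2, cp_id. nra.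
  - intro x. apply (derivable_pt_lim_scal atan 2 x). apply derivable_pt_lim_atan.
Qed.

Lemma nat_above x : exists n : nat, x <= INR n.
Proof.
  destruct (archimed x) as [h _]. destruct (Rle_dec x 0).
  exists 0%nat; simpl; lra.
  destruct (IZN (up x)) as [N HN]. { apply le_IZR. lra. }
  exists N. rewrite HN, <- INR_IZR_INZ in h. lra.
Qed.

Lemma improper_exists (psi : R -> R) :
  (forall x, continuity_pt psi x) -> (forall x, 0 <= psi x <= 2 / (1 + x^2)) ->
  exists l, improper_integral_R psi l.
Proof.
  intros hc hb.
  pose (u := fun n : nat => Rint psi (- INR n) (INR n)).
  assert (Hchas : forall a b c, a <= b <= c -> Rint psi a b + Rint psi b c = Rint psi a c).
  { intros. apply Rint_chasles; apply int_cont; auto; lra. }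
  assert (Hpos : forall a b, a <= b -> 0 <= Rint psi a b).
  { intros. apply Rint_nonneg; auto. apply int_cont; auto. intros; apply hb. }
  assert (Hmono : forall a b c d, a <= c -> c <= d -> d <= b -> Rint psi c d <= Rint psi a b).
  { intros. rewrite <- (Hchas a c b) by lra. rewrite <- (Hchas c d b) by lra.
    pose proof (Hpos a c H). pose proof (Hpos d b H1). lra. }
  assert (Hg : Un_growing u).
  { intro n. unfold u. rewrite S_INR. pose proof (pos_INR n). apply Hmono; lra. }
  assert (Hub : has_ub u).
  { exists (2 * PI). intros x [n ->]. unfold u. pose proof (pos_INR n).
    apply Rle_trans with (Rint (fun x => 2 / (1 + x^2)) (- INR n) (INR n)).
    apply Rint_le. lra. apply int_cont; auto; lra.
    apply int_cont. lra. intro x. apply cp_mult. apply cp_const. apply cp_inv. apply cp_plus. apply cp_const.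
    apply cp_pow2, cp_id. nra. intros; apply hb.
    rewrite atan_int by lra. pose proof (atan_bound (INR n)). pose proof (atan_bound (- INR n)). lra. }
  destruct (growing_cv u Hg Hub) as [l Hl]. exists l.
  intros eps he. destruct (Hl eps he) as [N HN]. exists (INR N).
  intros a b ha hb'. split. constructor. apply int_cont; auto. pose proof (pos_INR N); lra.
  specialize (HN N (le_n N)). unfold Rdist in HN. pose proof (growing_ineq u l Hg Hl N).
  rewrite Rabs_left1 in HN by lra.
  destruct (nat_above (Rmax (- a) b)) as [K HK].
  pose proof (Rmax_l (-a) b). pose proof (Rmax_r (-a) b).
  pose proof (growing_ineq u l Hg Hl K).
  assert (u N <= Rint psi a b) by (unfold u; apply Hmono; pose proof (pos_INR N); lra).
  assert (Rint psi a b <= u K) by (unfold u; apply Hmono; pose proof (pos_INR N); lra).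
  rewrite Rabs_left1; lra.
Qed.

Lemma integral_R_spec psi : (exists l, improper_integral_R psi l) ->
  improper_integral_R psi (integral_R psi).
Proof.
  intro H. unfold integral_R. destruct excluded_middle_informative as [H1|H1].
  - destruct (constructive_indefinite_description _ H1) as [l Hl]. exact Hl.
  - contradiction.
Qed.

Definition feps (q eps x : R) : R := / (1 + Rpower (eps^2 + x^2) q).

Lemma Rpower_sq L q : 0 < L -> Rpower (L^2) q = Rpower L (2*q).
Proof.
  intro. rewrite <- Rpower_mult. f_equal.
  replace 2%R with (INR 2) by (simpl; ring). rewrite Rpower_pow by auto. reflexivity.
Qed.

Lemma Rpower_Rinv x y : 0 < x -> Rpower (/ x) y = / Rpower x y.
Proof.
  intro. unfold Rpower. rewrite ln_Rinv by auto.
  replace (y * - ln x) with (- (y * ln x)) by ring. apply exp_Ropp.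
Qed.

Lemma L_pow alpha c nu : 0 < alpha -> 0 < c -> 0 < nu ->
  Rpower (Rpower alpha (2*nu/(2*nu+1)) * Rpower c (/(2*nu+1))) (2*nu+1) = c * Rpower alpha (2*nu).
Proof.
  intros ha hc hn. rewrite <- Rpower_mult_distr by apply Rpower_pos'.
  rewrite !Rpower_mult. replace (2*nu/(2*nu+1)*(2*nu+1)) with (2*nu) by (field; lra).
  replace (/(2*nu+1)*(2*nu+1)) with 1 by (field; lra). rewrite Rpower_1 by auto. ring.
Qed.

Lemma A0_eq nu b alpha L lambda : / 2 <= nu -> 0 < b -> 0 < alpha -> 0 < L ->
  Rpower L (2*nu+1) = 2*PI*C_nu nu*b * Rpower alpha (2*nu) ->
  b * gstar nu alpha lambda / (b * gstar nu alpha lambda + / (2*PI))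
  = feps (nu + /2) (alpha / L) (/ L * lambda + 0).
Proof.
  intros hnu hb ha hL hLp. unfold feps, gstar.
  pose proof PI_RGT_0. pose proof (C_nu_pos nu ltac:(lra)).
  set (A := Rpower alpha (2*nu)). set (C := C_nu nu).
  assert (hA : 0 < A) by apply Rpower_pos'.
  assert (hs : 0 < alpha^2 + lambda^2) by nra.
  set (T := Rpower (alpha^2 + lambda^2) (nu + /2)).
  assert (hT : 0 < T) by apply Rpower_pos'.
  rewrite Rpower_Ropp. fold T.
  replace ((alpha / L)^2 + (/ L * lambda + 0)^2) with ((alpha^2 + lambda^2) * / (L^2)) by (field; lra).
  rewrite <- Rpower_mult_distr by (try apply Rinv_0_lt_compat; nra).
  fold T. replace (/ L^2) with (/ (L^2)) by reflexivity.
  assert (E : Rpower (/ L^2) (nu + /2) = / Rpower L (2*nu+1)).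
  { rewrite Rpower_Rinv by nra. rewrite Rpower_sq by auto. replace (2*(nu + /2)) with (2*nu+1) by field. reflexivity. }
  rewrite E, hLp. fold C. fold A. assert (hC : 0 < C) by exact H0. clearbody A C T. assert (0 < 2*PI*C*b*A) by (apply Rmult_lt_0_compat; [apply Rmult_lt_0_compat; [apply Rmult_lt_0_compat; [lra|exact hC]|exact hb]|exact hA]). field. repeat split; lra.
Qed.

Definition phi_ok (phi : R -> R) : Prop :=
  (forall y, continuity_pt phi y) /\
  (forall y z, 0 <= z /\ z <= y /\ y <= 1 -> phi z <= phi y) /\
  (forall y z, 0 <= z /\ z <= y /\ y <= 1 -> phi y - phi z <= 2 * (y - z)) /\
  (forall y, 0 <= y <= 1 -> 0 <= phi y <= y) /\
  0 < phi (/ 2).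

Lemma H_bounds y r k : 0 < k -> 0 <= y -> 0 <= r ->
  0 <= y / (y + k) <= 1 /\ y / (y + k) <= (y + r) / (y + r + k) <= y / (y + k) + r / k
  /\ (y + r) / (y + r + k) <= 1.
Proof.
  intros hk hy hr.
  assert (E : (y + r) / (y + r + k) - y / (y + k) = r * k / ((y + r + k) * (y + k))) by (field; lra).
  assert (h1 : 0 <= r * k / ((y + r + k) * (y + k))).
  { apply Rmult_le_pos. nra. left; apply Rinv_0_lt_compat. nra. }
  assert (h2 : r * k / ((y + r + k) * (y + k)) <= r / k).
  { replace (r / k) with (r * k / (k * k)) by (field; lra).
    unfold Rdiv. apply Rmult_le_compat_l. nra. apply Rinv_le_contravar. nra. nra. }
  assert (h3 : y / (y + k) <= 1).
  { apply Rmult_le_reg_r with (y + k). lra. field_simplify; lra. }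
  assert (h4 : (y + r) / (y + r + k) <= 1).
  { apply Rmult_le_reg_r with (y + r + k). lra. field_simplify; lra. }
  assert (0 <= y / (y + k)) by (apply Rmult_le_pos; [lra| left; apply Rinv_0_lt_compat; lra]).
  lra.
Qed.

Lemma fe_range q e x : 0 < feps q e x <= 1.
Proof.
  unfold feps. pose proof (Rpower_pos' (e^2 + x^2) q). split.
  apply Rinv_0_lt_compat; lra. rewrite <- Rinv_1. apply Rinv_le_contravar; lra.
Qed.

Lemma fe_cont q e x : 0 < e -> continuity_pt (feps q e) x.
Proof.
  intro he. unfold feps. apply cp_inv. apply cp_plus. apply cp_const.
  apply (cp_Rpower (fun x => e^2 + x^2)). apply cp_plus. apply cp_const. apply cp_pow2, cp_id.
  nra. pose proof (Rpower_pos' (e^2 + x^2) q). lra.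
Qed.

Lemma fe_le_fx q e x : 0 < q -> 0 < e -> feps q e x <= fx (2*q) x.
Proof.
  intros hq he. unfold feps, fx. apply Rinv_le_contravar.
  pose proof (rpow_nonneg (Rabs x) (2*q)); lra.
  apply Rplus_le_compat_l. unfold rpow. destruct Req_EM_T. left; apply Rpower_pos'.
  rewrite <- Rpower_sq by (apply Rabs_pos_lt; intro; apply n; rewrite H; apply Rabs_R0).
  rewrite pow2_abs. apply Rle_Rpower_l. lra.
  split. pose proof (Rabs_pos_lt x). assert (x <> 0) by (intro; apply n; rewrite H0; apply Rabs_R0). nra.
  nra.
Qed.

Lemma fe_ge_fx q e x : 0 < q -> 0 < e -> fx (2*q) (Rabs x + e) <= feps q e x.
Proof.
  intros hq he. unfold feps, fx. apply Rinv_le_contravar.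
  pose proof (Rpower_pos' (e^2 + x^2) q); lra.
  apply Rplus_le_compat_l. pose proof (Rabs_pos x).
  rewrite (Rabs_right (Rabs x + e)) by lra.
  unfold rpow. destruct Req_EM_T. lra.
  rewrite <- Rpower_sq by lra. apply Rle_Rpower_l. lra.
  pose proof (pow2_abs x). split. nra. nra.
Qed.

Lemma chas_c f a b c : (forall x, continuity_pt f x) -> a <= b -> b <= c ->
  Rint f a b + Rint f b c = Rint f a c.
Proof. intros. apply Rint_chasles; apply int_cont; auto. Qed.

Lemma le_c f g a b : (forall x, continuity_pt f x) -> (forall x, continuity_pt g x) -> a <= b ->
  (forall x, a < x < b -> f x <= g x) -> Rint f a b <= Rint g a b.
Proof. intros. apply Rint_le; auto; apply int_cont; auto. Qed.

Lemma fe_int_bounds phi q e M : phi_ok phi -> 0 < q -> 0 < e -> 0 <= M ->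
  Rint (fun x => phi (fx (2*q) x)) (-M) M - 2 * e
    <= Rint (fun x => phi (feps q e x)) (-M) M
    <= Rint (fun x => phi (fx (2*q) x)) (-M) M.
Proof.
  intros [hc [hm [_ [hr _]]]] hq he hM.
  set (psi := fun x => phi (fx (2*q) x)).
  set (Phi := fun x => phi (feps q e x)).
  assert (cpsi : forall x, continuity_pt psi x).
  { intro x. unfold psi. apply (cp_comp phi (fx (2*q))). apply fx_cont; lra. apply hc. }
  assert (cPhi : forall x, continuity_pt Phi x).
  { intro x. unfold Phi. apply (cp_comp phi (feps q e)). apply fe_cont; lra. apply hc. }
  assert (psi01 : forall x, 0 <= psi x <= 1).
  { intro x. unfold psi. pose proof (fx_range (2*q) x). pose proof (hr (fx (2*q) x)). lra. }
  assert (Hpos : forall a b, a <= b -> 0 <= Rint psi a b).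
  { intros. apply Rint_nonneg; auto. apply int_cont; auto. intros; apply psi01. }
  assert (Hle1 : forall a b, a <= b -> Rint psi a b <= b - a).
  { intros. replace (b - a) with (Rint (fun _ => 1) a b) by (rewrite Rint_const; ring).
    apply le_c; auto. intro; apply cp_const. intros; apply psi01. }
  split.
  - rewrite <- (chas_c Phi (-M) 0 M), <- (chas_c psi (-M) 0 M) by (auto; lra).
    assert (A1 : Rint psi 0 M - e <= Rint Phi 0 M).
    { apply Rle_trans with (Rint (fun x => psi (1 * x + e)) 0 M).
      - rewrite Rint_affine by (auto; lra).
        replace (1 * 0 + e) with e by ring. replace (1 * M + e) with (M + e) by ring.
        rewrite Rinv_1, Rmult_1_l.
        pose proof (chas_c psi 0 e (M+e) cpsi ltac:(lra) ltac:(lra)).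
        pose proof (chas_c psi 0 M (M+e) cpsi ltac:(lra) ltac:(lra)).
        pose proof (Hle1 0 e ltac:(lra)). pose proof (Hpos M (M+e) ltac:(lra)). lra.
      - apply le_c; auto.
        intro x. apply (cp_comp psi (fun x => 1*x+e)). apply cp_plus. apply cp_mult.
        apply cp_const. apply cp_id. apply cp_const. apply cpsi.
        intros x hx. unfold psi, Phi. apply hm.
        replace (1*x+e) with (x+e) by ring.
        pose proof (fx_range (2*q) (x+e)). pose proof (fe_range q e x).
        pose proof (fe_ge_fx q e x hq he). rewrite Rabs_right in H1 by lra. lra. }
    assert (A2 : Rint psi (-M) 0 - e <= Rint Phi (-M) 0).
    { apply Rle_trans with (Rint (fun x => psi (1 * x + - e)) (-M) 0).
      - rewrite Rint_affine by (auto; lra).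
        replace (1 * 0 + - e) with (-e) by ring. replace (1 * -M + - e) with (-M - e) by ring.
        rewrite Rinv_1, Rmult_1_l.
        pose proof (chas_c psi (-M-e) (-e) 0 cpsi ltac:(lra) ltac:(lra)).
        pose proof (chas_c psi (-M-e) (-M) 0 cpsi ltac:(lra) ltac:(lra)).
        pose proof (Hle1 (-e) 0 ltac:(lra)). pose proof (Hpos (-M-e) (-M) ltac:(lra)). lra.
      - apply le_c; auto.
        intro x. apply (cp_comp psi (fun x => 1*x+ -e)). apply cp_plus. apply cp_mult.
        apply cp_const. apply cp_id. apply cp_const. apply cpsi. lra.
        intros x hx. unfold psi, Phi.
        assert (E : fx (2*q) (1*x + -e) = fx (2*q) (Rabs x + e)).
        { unfold fx. rewrite (Rabs_left x) by lra. f_equal. f_equal. f_equal.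
          rewrite <- Rabs_Ropp. f_equal. ring. }
        rewrite E. apply hm.
        pose proof (fx_range (2*q) (Rabs x+e)). pose proof (fe_range q e x).
        pose proof (fe_ge_fx q e x hq he). lra. }
    lra.
  - apply le_c; auto. lra. intros x _. unfold psi, Phi. apply hm.
    pose proof (fx_range (2*q) x). pose proof (fe_range q e x).
    pose proof (fe_le_fx q e x hq he). lra.
Qed.

Lemma adelta_cont nu b delta theta lambda : / 2 <= nu -> 0 < b -> 0 < delta * theta ->
  Rabs lambda <= PI -> continuity_pt (adelta nu b delta theta) lambda.
Proof.
  intros hnu hb ha hl. pose proof PI_RGT_0.
  unfold adelta. unfold Rdiv.
  assert (cg : continuity_pt (fun l => b * gdelta nu delta theta l) lambda).
  { apply cp_mult. apply cp_const. apply gdelta_cont; auto. }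
  apply (cp_mult (fun l => b * gdelta nu delta theta l)). auto.
  apply (cp_inv (fun l => b * gdelta nu delta theta l + / (2 * PI))).
  apply cp_plus; auto. apply cp_const.
  pose proof (gdelta_bounds nu delta theta lambda hnu ltac:(lra)).
  pose proof (gstar_pos nu (delta*theta) lambda ltac:(lra)).
  assert (0 < / (2*PI)) by (apply Rinv_0_lt_compat; lra). nra.
Qed.

Lemma main_bounds nu b theta delta phi : / 2 <= nu -> 0 < b -> 0 < theta -> 0 < delta ->
  phi_ok phi ->
  let alpha := delta * theta in
  let c := 2 * PI * C_nu nu * b in
  let L := Rpower alpha (2 * nu / (2 * nu + 1)) * Rpower c (/ (2 * nu + 1)) in
  let psi := fun x => phi (fx (2 * nu + 1) x) in
  L * (Rint psi (- (PI / L)) (PI / L) - 2 * (alpha / L))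
    <= Rint (fun l => phi (adelta nu b delta theta l)) (- PI) PI
    <= L * Rint psi (- (PI / L)) (PI / L) + 16 * PI * c * Rpower alpha (2 * nu).
Proof.
  intros hnu hb ht hd hphi alpha c L psi.
  pose proof PI_RGT_0. pose proof (C_nu_pos nu ltac:(lra)) as hC.
  assert (ha : 0 < alpha) by (unfold alpha; nra).
  assert (hc : 0 < c) by (unfold c; apply Rmult_lt_0_compat; [apply Rmult_lt_0_compat|]; lra).
  assert (hL : 0 < L) by (unfold L; apply Rmult_lt_0_compat; apply Rpower_pos').
  assert (hLp : Rpower L (2*nu+1) = 2*PI*C_nu nu*b * Rpower alpha (2*nu)).
  { unfold L. rewrite L_pow by lra. reflexivity. }
  set (A := Rpower alpha (2*nu)). assert (hA : 0 < A) by apply Rpower_pos'.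
  set (q := nu + / 2). set (e := alpha / L).
  assert (he : 0 < e) by (unfold e; apply Rdiv_lt_0_compat; auto).
  destruct hphi as [hpc [hpm [hpl [hpr hp2]]]].
  set (Phie := fun x => phi (feps q e x)).
  assert (cPhie : forall x, continuity_pt Phie x).
  { intro x. unfold Phie. apply (cp_comp phi (feps q e)). apply fe_cont; lra. apply hpc. }
  set (Phil := fun l => Phie (/ L * l + 0)).
  assert (cPhil : forall x, continuity_pt Phil x).
  { intro x. unfold Phil. apply (cp_comp Phie (fun l => / L * l + 0)).
    apply cp_plus. apply cp_mult. apply cp_const. apply cp_id. apply cp_const. apply cPhie. }
  assert (IPhil : Rint Phil (-PI) PI = L * Rint Phie (- (PI / L)) (PI / L)).
  { unfold Phil. rewrite Rint_affine; auto. 2:{ apply Rinv_0_lt_compat; auto. } 2: lra.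
    rewrite Rinv_inv. f_equal. f_equal; unfold Rdiv; ring. }
  assert (Hpt : forall l, -PI <= l <= PI ->
     Phil l <= phi (adelta nu b delta theta l) <= Phil l + 8 * c * A).
  { intros l hl.
    assert (hl' : Rabs l <= 3 * PI / 2) by (apply Rabs_le; lra).
    pose proof (gdelta_bounds nu delta theta l hnu hl') as hg. fold alpha A in hg.
    pose proof (gstar_pos nu alpha l ltac:(lra)) as hgs.
    set (y := b * gstar nu alpha l). set (r := b * (gdelta nu delta theta l - gstar nu alpha l)).
    assert (hk : 0 < / (2 * PI)) by (apply Rinv_0_lt_compat; lra).
    assert (hy : 0 <= y) by (unfold y; nra).
    assert (hr : 0 <= r) by (unfold r; nra).
    destruct (H_bounds y r (/ (2*PI)) hk hy hr) as [h1 [h2 h3]].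
    assert (Ea : adelta nu b delta theta l = (y + r) / (y + r + / (2*PI))).
    { unfold adelta, y, r. f_equal; ring. }
    assert (E0 : Phil l = phi (y / (y + / (2*PI)))).
    { unfold Phil, Phie, y. f_equal. symmetry. apply A0_eq; auto. }
    assert (hrk : r / / (2 * PI) <= 4 * c * A).
    { unfold Rdiv. rewrite Rinv_inv. unfold r, c. apply Rle_trans with (b * (4*(C_nu nu*A)) * (2*PI)); [apply Rmult_le_compat_r; [lra|apply Rmult_le_compat_l; lra] | right; ring]. }
    rewrite E0, Ea. split. apply hpm. lra.
    pose proof (hpl ((y + r) / (y + r + / (2 * PI))) (y / (y + / (2 * PI)))). lra. }
  assert (Iad : Riemann_integrable (fun l => phi (adelta nu b delta theta l)) (-PI) PI).
  { apply continuity_implies_RiemannInt. lra. intros x hx.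
    apply (cp_comp phi (adelta nu b delta theta)). apply adelta_cont; auto.
    unfold alpha in ha; auto. apply Rabs_le; lra. apply hpc. }
  pose proof (fe_int_bounds phi q e (PI / L) (conj hpc (conj hpm (conj hpl (conj hpr hp2))))
     ltac:(unfold q; lra) he ltac:(left; apply Rdiv_lt_0_compat; auto)) as hfe.
  replace (2 * q) with (2 * nu + 1) in hfe by (unfold q; field).
  fold psi in hfe. fold Phie in hfe.
  split.
  - apply Rle_trans with (Rint Phil (-PI) PI).
    rewrite IPhil. apply Rmult_le_compat_l; lra.
    apply Rint_le. lra. apply int_cont; auto. lra. auto. intros; apply Hpt; lra.
  - apply Rle_trans with (Rint (fun l => Phil l + 8 * c * A) (-PI) PI).
    apply Rint_le. lra. auto. apply int_plus_const. apply int_cont; auto. lra.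
    intros; apply Hpt; lra.
    rewrite Rint_plus_const by (apply int_cont; auto; lra). rewrite IPhil.
    assert (L * Rint Phie (- (PI / L)) (PI / L) <= L * Rint psi (- (PI / L)) (PI / L))
      by (apply Rmult_le_compat_l; lra). nra.
Qed.

Lemma Rpower_small y t : 0 < y -> 0 < t -> exists eta, 0 < eta /\
  forall a, 0 < a < eta -> Rpower a y < t.
Proof.
  intros hy ht. exists (Rpower t (/ y)). split. apply Rpower_pos'.
  intros a ha. pose proof (Rlt_Rpower_l a (Rpower t (/ y)) y hy ha).
  rewrite Rpower_mult, Rinv_l, Rpower_1 in H by lra. exact H.
Qed.

Lemma Rpower_le1 x y : 0 < x <= 1 -> 1 <= y -> Rpower x y <= x.
Proof.
  intros hx hy. unfold Rpower. rewrite <- (exp_ln x) at 2 by lra.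
  assert (ln x <= 0) by (rewrite <- ln_1; apply ln_le'; lra).
  destruct (Rle_lt_or_eq_dec (y * ln x) (ln x)) as [h|h]. nra.
  left; apply exp_increasing; auto. rewrite h; lra.
Qed.

Lemma psi_facts phi nu : phi_ok phi -> / 2 <= nu ->
  let psi := fun x => phi (fx (2 * nu + 1) x) in
  (forall x, continuity_pt psi x) /\ (forall x, 0 <= psi x <= 2 / (1 + x^2)) /\
  (forall x, Rabs x <= 1 -> phi (/2) <= psi x).
Proof.
  intros [hc [hm [hl [hr hp]]]] hnu psi. split; [|split].
  - intro x. unfold psi. apply (cp_comp phi (fx (2*nu+1))). apply fx_cont; lra. apply hc.
  - intro x. unfold psi. pose proof (fx_range (2*nu+1) x). pose proof (hr (fx (2*nu+1) x)).
    pose proof (fx_atan (2*nu+1) x ltac:(lra)). lra.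
  - intros x hx. unfold psi. apply hm. pose proof (fx_range (2*nu+1) x).
    pose proof (fx_half (2*nu+1) x ltac:(lra) hx). lra.
Qed.

Lemma equiv_generic phi nu b theta : phi_ok phi -> / 2 <= nu -> 0 < b -> 0 < theta ->
  equiv_at_0plus
    (fun delta => Rint (fun l => phi (adelta nu b delta theta l)) (- PI) PI)
    (fun delta => Rpower (delta * theta) (2 * nu / (2 * nu + 1))
                  * Rpower (2 * PI * C_nu nu * b) (/ (2 * nu + 1))
                  * integral_R (fun x => phi (fx (2 * nu + 1) x))).
Proof.
  intros hphi hnu hb ht.
  destruct (psi_facts phi nu hphi hnu) as [cpsi [bpsi lpsi]].
  set (psi := fun x => phi (fx (2 * nu + 1) x)) in *.
  assert (HI := integral_R_spec psi (improper_exists psi cpsi bpsi)).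
  set (I := integral_R psi) in *.
  pose proof PI_RGT_0. pose proof (C_nu_pos nu ltac:(lra)) as hC.
  assert (hp2 : 0 < phi (/2)) by (destruct hphi as [_ [_ [_ [_ h]]]]; exact h).
  assert (Hchas : forall a b c, a <= b <= c -> Rint psi a b + Rint psi b c = Rint psi a c).
  { intros. apply Rint_chasles; apply int_cont; auto; lra. }
  assert (Hpos : forall a b, a <= b -> 0 <= Rint psi a b).
  { intros. apply Rint_nonneg; auto. apply int_cont; auto. intros; apply bpsi. }
  assert (hIpos : 0 < I).
  { destruct (HI (phi (/2)) hp2) as [M HM].
    pose (M' := Rmax M 1).
    assert (hM1 : M <= M' /\ 1 <= M') by (unfold M'; split; [apply Rmax_l|apply Rmax_r]).
    clearbody M'.
    destruct (HM (- (M' + 1)) (M' + 1) ltac:(lra) ltac:(lra)) as [_ HM2].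
    assert (2 * phi (/2) <= Rint psi (-1) 1).
    { replace (2 * phi (/2)) with (Rint (fun _ => phi (/2)) (-1) 1) by (rewrite Rint_const; ring).
      apply Rint_le. lra. apply RiemannInt_P14. apply int_cont; auto; lra.
      intros x hx. apply lpsi. apply Rabs_le; lra. }
    rewrite <- (Hchas (-(M'+1)) (-1) (M'+1)) in HM2 by lra.
    rewrite <- (Hchas (-1) 1 (M'+1)) in HM2 by lra.
    pose proof (Hpos (-(M'+1)) (-1) ltac:(lra)). pose proof (Hpos 1 (M'+1) ltac:(lra)).
    apply Rabs_def2 in HM2. lra. }
  intros eps heps.
  set (r := eps * I / 3).
  assert (hr : 0 < r) by (unfold r; nra).
  destruct (HI r hr) as [M0 HM0].
  pose (M1 := Rmax M0 0).
  assert (hM1 : M0 <= M1 /\ 0 <= M1) by (unfold M1; split; [apply Rmax_l|apply Rmax_r]).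
  clearbody M1.
  set (c := 2 * PI * C_nu nu * b).
  assert (hc : 0 < c) by (unfold c; apply Rmult_lt_0_compat; [apply Rmult_lt_0_compat|]; lra).
  set (K := Rpower c (/ (2 * nu + 1))). assert (hK : 0 < K) by apply Rpower_pos'.
  pose (Lmax := Rmin 1 (Rmin (eps * I / (48 * PI)) (PI / (M1 + 1)))).
  assert (hLmax : 0 < Lmax).
  { unfold Lmax. apply Rmin_pos. lra. apply Rmin_pos.
    apply Rdiv_lt_0_compat; nra. apply Rdiv_lt_0_compat; lra. }
  assert (hLm : Lmax <= 1 /\ Lmax <= eps * I / (48 * PI) /\ Lmax <= PI / (M1 + 1)).
  { unfold Lmax. pose proof (Rmin_l 1 (Rmin (eps * I / (48 * PI)) (PI / (M1 + 1)))).
    pose proof (Rmin_r 1 (Rmin (eps * I / (48 * PI)) (PI / (M1 + 1)))).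
    pose proof (Rmin_l (eps * I / (48 * PI)) (PI / (M1 + 1))).
    pose proof (Rmin_r (eps * I / (48 * PI)) (PI / (M1 + 1))). lra. }
  clearbody Lmax.
  destruct (Rpower_small (2 * nu / (2 * nu + 1)) (Lmax / K)) as [eta1 [he1 H1]].
  { apply Rdiv_lt_0_compat; lra. } { apply Rdiv_lt_0_compat; lra. }
  destruct (Rpower_small (/ (2 * nu + 1)) (eps * I / 6 * K)) as [eta2 [he2 H2]].
  { apply Rinv_0_lt_compat; lra. } { apply Rmult_lt_0_compat; [|lra]. apply Rdiv_lt_0_compat; nra. }
  exists (Rmin eta1 eta2 / theta). split.
  { apply Rdiv_lt_0_compat; auto. apply Rmin_pos; auto. }
  intros delta [hd0 hd1].
  set (alpha := delta * theta).
  assert (ha : 0 < alpha) by (unfold alpha; nra).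
  assert (ha1 : alpha < eta1 /\ alpha < eta2).
  { pose proof (Rmin_l eta1 eta2). pose proof (Rmin_r eta1 eta2).
    apply Rmult_lt_compat_r with (r := theta) in hd1; auto.
    unfold Rdiv in hd1. rewrite Rmult_assoc, Rinv_l, Rmult_1_r in hd1 by lra.
    unfold alpha; lra. }
  set (L := Rpower alpha (2 * nu / (2 * nu + 1)) * K).
  assert (hL : 0 < L) by (unfold L; apply Rmult_lt_0_compat; auto; apply Rpower_pos').
  assert (hLL : L < Lmax).
  { specialize (H1 alpha ltac:(lra)). unfold L.
    apply Rmult_lt_compat_r with (r := K) in H1; auto.
    assert (Lmax / K * K = Lmax) by (field; lra). lra. }
  assert (hL1 : L <= 1) by lra.
  assert (hL2 : L < eps * I / (48 * PI)) by lra.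
  assert (hL3 : L < PI / (M1 + 1)) by lra.
  assert (hM : M0 < PI / L).
  { apply Rmult_lt_reg_r with L; auto. unfold Rdiv. rewrite Rmult_assoc, Rinv_l, Rmult_1_r by lra.
    apply Rmult_lt_compat_r with (r := M1 + 1) in hL3; [|lra].
    unfold Rdiv in hL3. rewrite Rmult_assoc, Rinv_l, Rmult_1_r in hL3 by lra. nra. }
  assert (hE : alpha / L = Rpower alpha (/ (2 * nu + 1)) / K).
  { unfold L. rewrite <- (Rpower_1 alpha) at 1 by auto.
    replace 1 with (2 * nu / (2 * nu + 1) + / (2 * nu + 1)) at 1 by (field; lra).
    rewrite Rpower_plus. field. split. lra. apply Rgt_not_eq, Rpower_pos'. }
  assert (hEps : 2 * (alpha / L) / I <= eps / 3).
  { rewrite hE. specialize (H2 alpha ltac:(lra)).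
    apply Rmult_le_reg_r with (I * K). nra. field_simplify; try lra. }
  assert (hLp : Rpower L (2*nu+1) = c * Rpower alpha (2*nu)).
  { unfold L, K. rewrite L_pow by lra. reflexivity. }
  assert (hRem : 16 * PI * c * Rpower alpha (2 * nu) / (L * I) < eps / 3).
  { assert (E : c * Rpower alpha (2*nu) = Rpower L (2*nu) * L).
    { rewrite <- hLp, Rpower_plus, Rpower_1 by auto. reflexivity. }
    assert (hLn : Rpower L (2*nu) <= L) by (apply Rpower_le1; lra).
    replace (16 * PI * c * Rpower alpha (2 * nu)) with (16 * PI * (c * Rpower alpha (2 * nu))) by ring.
    rewrite E. replace (16 * PI * (Rpower L (2 * nu) * L) / (L * I)) with (16 * PI * Rpower L (2*nu) / I)
      by (field; lra).
    apply Rmult_lt_reg_r with I; auto. unfold Rdiv. rewrite Rmult_assoc, Rinv_l, Rmult_1_r by lra.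
    apply Rmult_lt_compat_r with (r := 48 * PI) in hL2; [|lra].
    unfold Rdiv in hL2. rewrite Rmult_assoc, Rinv_l, Rmult_1_r in hL2 by lra. nra. }
  pose proof (main_bounds nu b theta delta phi hnu hb ht hd0 hphi) as HB.
  simpl in HB. fold alpha c in HB. fold K in HB. fold L in HB. fold psi in HB.
  destruct (HM0 (- (PI / L)) (PI / L) ltac:(lra) ltac:(lra)) as [_ HJ].
  set (J := Rint psi (- (PI / L)) (PI / L)) in *.
  set (F := Rint (fun l => phi (adelta nu b delta theta l)) (- PI) PI) in *.
  replace (Rpower (delta * theta) (2 * nu / (2 * nu + 1)) * Rpower (2 * PI * C_nu nu * b) (/ (2 * nu + 1)) * I)
    with (L * I) by (unfold L, K, c, alpha; ring).
  apply Rabs_def2 in HJ. unfold r in HJ.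
  assert (hLI : 0 < L * I) by nra.
  assert (F / (L * I) - 1 = (F - L * I) / (L * I)) by (field; lra).
  assert (hlow : (J - 2 * (alpha / L)) / I - 1 <= F / (L * I) - 1).
  { apply Rplus_le_compat_r. apply Rmult_le_reg_r with (L * I); auto.
    unfold Rdiv. rewrite (Rmult_assoc F), Rinv_l, Rmult_1_r by lra.
    replace ((J - 2 * (alpha * / L)) * / I * (L * I)) with (L * (J - 2 * (alpha * / L))) by (field; lra).
    unfold Rdiv in HB. lra. }
  assert (hup : F / (L * I) - 1 <= J / I + 16 * PI * c * Rpower alpha (2 * nu) / (L * I) - 1).
  { apply Rplus_le_compat_r. apply Rmult_le_reg_r with (L * I); auto.
    unfold Rdiv. rewrite (Rmult_assoc F), Rinv_l, Rmult_1_r by lra.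
    replace ((J * / I + 16 * PI * c * Rpower alpha (2 * nu) * / (L * I)) * (L * I))
      with (L * J + 16 * PI * c * Rpower alpha (2 * nu)) by (field; lra). lra. }
  assert (hJI : (J - I) / I < eps / 3 /\ - (eps / 3) < (J - I) / I).
  { split; apply Rmult_lt_reg_r with I; auto; unfold Rdiv;
      rewrite Rmult_assoc, Rinv_l, Rmult_1_r by lra; nra. }
  assert (E1 : (J - 2 * (alpha / L)) / I - 1 = (J - I) / I - 2 * (alpha / L) / I) by (field; lra).
  assert (E2 : J / I - 1 = (J - I) / I) by (field; lra).
  apply Rabs_def1; lra.
Qed.

Lemma phi_id_ok : phi_ok (fun y => y).
Proof.
  split; [|split; [|split; [|split]]].
  - intro; apply cp_id.
  - intros; lra.
  - intros; lra.
  - intros; lra.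
  - lra.
Qed.

Lemma phi_sq_ok : phi_ok (fun y => y^2).
Proof.
  split; [|split; [|split; [|split]]].
  - intro; apply cp_pow2, cp_id.
  - intros y z h; nra.
  - intros y z h; nra.
  - intros y h; nra.
  - nra.
Qed.

Theorem lemma5p4 (nu b theta : R) (hnu : / 2 <= nu) (hb : 0 < b) (htheta : 0 < theta) :
  equiv_at_0plus
    (fun delta => Rint (fun lambda => adelta nu b delta theta lambda) (- PI) PI)
    (fun delta => Rpower (delta * theta) (2 * nu / (2 * nu + 1))
                  * Rpower (2 * PI * C_nu nu * b) (/ (2 * nu + 1))
                  * integral_R (fun x => / (1 + rpow (Rabs x) (2 * nu + 1))))
  /\
  equiv_at_0plus
    (fun delta => Rint (fun lambda => (adelta nu b delta theta lambda) ^ 2) (- PI) PI)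
    (fun delta => Rpower (delta * theta) (2 * nu / (2 * nu + 1))
                  * Rpower (2 * PI * C_nu nu * b) (/ (2 * nu + 1))
                  * integral_R (fun x => (/ (1 + rpow (Rabs x) (2 * nu + 1))) ^ 2)).
Proof.
  split.
  - exact (equiv_generic (fun y => y) nu b theta phi_id_ok hnu hb htheta).
  - exact (equiv_generic (fun y => y^2) nu b theta phi_sq_ok hnu hb htheta).
Qed.
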